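(* Let $X$ be a set, $A$ a commutative unital $\mathbb{R}$-algebra, $\bar{}\colon A\to\mathbb{R}^X$ a unital $\mathbb{R}$-algebra homomorphism, and $Q\subseteq A$ an archimedean quadratic module. Let $Y$, $m\colon X\to Y$, $K_{Q,X}$, $K_{Q,Y}$ be as in the context. (1) If $m(K_{Q,X})=K_{Q,Y}$, then for every $f\in A$: if $\bar f(x)>0$ for all $x\in K_{Q,X}$, then $f\in Q$. (2) If $\overline{m(K_{Q,X})}=K_{Q,Y}$ (closure taken in $Y$), then for every $f\in A$: if $\bar f(x)\ge 0$ for all $x\in K_{Q,X}$, then $f+\epsilon\in Q$ for every real $\epsilon>0$.
   Context: A quadratic module of $A$ is a subset $Q\subseteq A$ with $Q+Q\subseteq Q$, $a^2Q\subseteq Q$ for all $a\in A$, and $1\in Q$. $Q$ is archimedean if for every $a\in A$ there is an integer $n\ge1$ with $n+a\in Q$. $K_{Q,X}:=\{x\in X\mid \bar g(x)\ge 0\ \forall g\in Q\}$. $Y$ denotes the set of all unital $\mathbb{R}$-algebra homomorphisms $y\colon A\to\mathbb{R}$; for $a\in A$, $\hat a\colon Y\to\mathbb{R}$ is $\hat a(y)=y(a)$, and $Y$ carries the weakest topology making all $\hat a$ continuous. $K_{Q,Y}:=\{y\in Y\mid \hat g(y)\ge0\ \forall g\in Q\}$. The map $m\colon X\to Y$ is $m(x)(a)=\bar a(x)$. *)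

(* Defs.v *)
From HB Require Import structures.
From mathcomp Require Import all_boot all_order all_algebra.
From mathcomp Require Import all_classical all_reals all_analysis.
Set Implicit Arguments. Unset Strict Implicit. Unset Printing Implicit Defensive.
Import Order.TTheory GRing.Theory Num.Theory.
Import numFieldNormedType.Exports.
Local Open Scope classical_set_scope.
Local Open Scope ring_scope.

Section Defs.
Variables (R : realType) (A : comAlgType R).

Definition is_alg_hom (y : A -> R) : Prop :=
  [/\ forall a b, y (a + b) = y a + y b,
      forall (r : R) a, y (r *: a) = r * y a,
      forall a b, y (a * b) = y a * y b &
      y 1 = 1].

(* a map bar : A -> R^X is a unital R-algebra homomorphism into R^X
   (pointwise operations) iff each evaluation a |-> bar a x is one *)
Definition is_alg_hom_fun (X : Type) (bar : A -> X -> R) : Prop :=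
  forall x, is_alg_hom (fun a => bar a x).

Definition quadratic_module (Q : set A) : Prop :=
  [/\ forall a b, Q a -> Q b -> Q (a + b),
      forall a g, Q g -> Q (a ^+ 2 * g) &
      Q 1].

Definition archimedean_qm (Q : set A) : Prop :=
  forall a, exists n : nat, (0 < n)%N /\ Q (n%:R + a).

Definition Yset : set {ptws A -> R} := [set y | is_alg_hom y].

(* Y carries the initial topology of the inclusion into {ptws A -> R},
   i.e. the weakest topology making all evaluations y |-> y a continuous *)
Local Notation Ytype := (set_type Yset).

Definition hat (a : A) (y : Ytype) : R := (set_val y : A -> R) a.

Lemma m_proof (X : Type) (bar : A -> X -> R) (hbar : is_alg_hom_fun bar) (x : X) :
  ((fun a => bar a x) : {ptws A -> R}) \in Yset.
Proof. by apply: mem_set; exact: hbar. Qed.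

Definition mmap (X : Type) (bar : A -> X -> R) (hbar : is_alg_hom_fun bar)
  (x : X) : Ytype := SigSub (m_proof hbar x).

Definition K_X (X : Type) (bar : A -> X -> R) (Q : set A) : set X :=
  [set x | forall g, Q g -> 0 <= bar g x].

Definition K_Y (Q : set A) : set Ytype :=
  [set y | forall g, Q g -> 0 <= hat g y].

End Defs.

Notation Ytype R A := (set_type (@Yset R A)).

(* Main.v *)
Set Warnings "-all".
Require Import Defs.
From HB Require Import structures.
From mathcomp Require Import all_boot all_order all_algebra.
From mathcomp Require Import all_classical all_reals all_analysis.
From mathcomp Require Import ring lra.
Import Order.TTheory GRing.Theory Num.Theory.
Import numFieldNormedType.Exports.
Local Open Scope classical_set_scope.
Local Open Scope ring_scope.
Set Implicit Arguments. Unset Strict Implicit. Unset Printing Implicit Defensive.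
Section QM.
Variables (R : realType) (A : comAlgType R).
Implicit Types (M : set A) (a b g : A).

Lemma algD (r s : R) : (r + s)%:A = r%:A + s%:A :> A.
Proof. by rewrite scalerDl. Qed.
Lemma algM (r s : R) : (r * s)%:A = r%:A * s%:A :> A.
Proof. by rewrite mulr_algl scalerA. Qed.
Lemma algN (r : R) : (- r)%:A = - r%:A :> A.
Proof. by rewrite scaleNr. Qed.
Lemma algB (r s : R) : (r - s)%:A = r%:A - s%:A :> A.
Proof. by rewrite algD algN. Qed.
Lemma alg1 : (1 : R)%:A = 1 :> A.
Proof. by rewrite scale1r. Qed.
Lemma alg0 : (0 : R)%:A = 0 :> A.
Proof. by rewrite scale0r. Qed.
Lemma algn (n : nat) : (n%:R : R)%:A = n%:R :> A.
Proof. by rewrite scaler_nat. Qed.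
Lemma algX (r : R) (n : nat) : (r ^+ n)%:A = r%:A ^+ n :> A.
Proof. elim: n => [|n IH]; first by rewrite !expr0 alg1. by rewrite !exprS algM IH. Qed.

Variable M : set A.
Hypothesis hM : quadratic_module M.

Lemma qmD a b : M a -> M b -> M (a + b).
Proof. by case: hM => H _ _; apply: H. Qed.
Lemma qmS a g : M g -> M (a ^+ 2 * g).
Proof. by case: hM => _ H _; apply: H. Qed.
Lemma qm1 : M 1.
Proof. by case: hM. Qed.
Lemma qmsq a : M (a ^+ 2).
Proof. by rewrite -[a ^+ 2]mulr1; apply/qmS/qm1. Qed.
Lemma qm0 : M 0.
Proof. by rewrite -[0](mulr0 (0 : A)) -expr2; apply: qmsq. Qed.
Lemma qmZ (r : R) a : 0 <= r -> M a -> M (r *: a).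
Proof.
move=> r0 Ma; have -> : r *: a = (Num.sqrt r)%:A ^+ 2 * a.
  by rewrite -algX sqr_sqrtr // mulr_algl.
exact: qmS.
Qed.
Lemma qmC (r : R) : 0 <= r -> M r%:A.
Proof. by move=> r0; apply: (qmZ r0 qm1). Qed.
Lemma qmCD (r : R) a : 0 <= r -> M a -> M (a + r%:A).
Proof. by move=> r0 Ma; apply: qmD Ma (qmC r0). Qed.

Lemma polar c :
  ((2^-1 : R)%:A * (c + 1)) ^+ 2 - ((2^-1 : R)%:A * (c - 1)) ^+ 2 = c :> A.
Proof.
set h := (2^-1 : R)%:A.
have -> : (h * (c + 1)) ^+ 2 - (h * (c - 1)) ^+ 2 = (h ^+ 2 * 4%:R) * c by ring.
rewrite /h -algX -algn -algM.
have -> : ((2^-1 : R) ^+ 2 * 4%:R) = 1 by field.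
by rewrite alg1 mul1r.
Qed.

Lemma qm_supp b c : M b -> M (- b) -> M (c * b).
Proof.
move=> Mb Mnb.
have -> : c * b = ((2^-1 : R)%:A * (c + 1)) ^+ 2 * b + ((2^-1 : R)%:A * (c - 1)) ^+ 2 * (- b).
  by rewrite -{1}(polar c); ring.
by apply: qmD; apply: qmS.
Qed.

Lemma qm_improper a : M (-1) -> M a.
Proof. by move=> Mn1; rewrite -[a]mulr1; apply: qm_supp Mn1; rewrite ?opprK; apply: qm1. Qed.

End QM.

Section Sig.
Variables (R : realType) (A : comAlgType R).
Implicit Types (M : set A).

Definition Sig : set A := [set s | forall P : set A, quadratic_module P -> P s].

Lemma Sig_qm : quadratic_module Sig.
Proof.
split.
- move=> a b Ha Hb P hP. have := Ha P hP. have := Hb P hP. move=> h1 h2. exact: (qmD hP h2 h1).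
- by move=> a g Hg P hP; apply: (qmS hP _ (Hg P hP)).
- by move=> P hP; apply: qm1.
Qed.

Lemma Sig_sub M : quadratic_module M -> Sig `<=` M.
Proof. by move=> hM s Ss; apply: Ss. Qed.

Lemma Sig_mul M s m : quadratic_module M -> Sig s -> M m -> M (s * m).
Proof.
move=> hM Ss; have : quadratic_module [set s | forall m, M m -> M (s * m)].
  split.
  - by move=> a b Ha Hb m' Mm; rewrite mulrDl; apply: (qmD hM (Ha m' Mm) (Hb m' Mm)).
  - by move=> a g Hg m' Mm; rewrite -mulrA; apply: (qmS hM _ (Hg m' Mm)).
  - by move=> m' Mm; rewrite mul1r.
by move/Ss; apply.
Qed.

Definition gen M (a : A) : set A :=
  [set x | exists m s, [/\ M m, Sig s & x = m + s * a]].

Lemma gen_qm M a : quadratic_module M -> quadratic_module (gen M a).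
Proof.
move=> hM; split.
- move=> _ _ [m1 [s1 [M1 S1 ->]]] [m2 [s2 [M2 S2 ->]]].
  exists (m1 + m2), (s1 + s2); split. exact: (qmD hM M1 M2). exact: (qmD Sig_qm S1 S2). ring. 
- move=> b _ [m [s [Mm Ss ->]]]; exists (b^+2 * m), (b^+2 * s); split;
    [exact: qmS | exact: (qmS Sig_qm) | ring].
- by exists 1, 0; split; [exact: qm1 | exact: (qm0 Sig_qm) | ring].
Qed.

Lemma gen_sub M a : quadratic_module M -> M `<=` gen M a.
Proof. move=> hM m Mm; exists m, 0; split => //; [exact: (qm0 Sig_qm) | ring]. Qed.

Lemma gen_a M a : quadratic_module M -> gen M a a.
Proof. move=> hM; exists 0, 1; split; [exact: qm0 | exact: (qm1 Sig_qm) | ring]. Qed.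

Definition maxprop M :=
  [/\ quadratic_module M, ~ M (-1) &
      forall M', quadratic_module M' -> M `<=` M' -> ~ M' (-1) -> M' `<=` M].

Lemma maxprop_total M : maxprop M -> forall a, M a \/ M (- a).
Proof.
case=> hM Mp Mmax a.
have gen1 b : ~ M b -> gen M b (-1).
  move=> Mb; apply: contrapT => Hg; apply: Mb.
  exact: (Mmax _ (gen_qm b hM) (gen_sub b hM) Hg) (gen_a b hM).
apply: contrapT => /not_orP [Ma Mna].
case: (gen1 _ Ma) => m1 [s1 [M1 S1 E1]].
case: (gen1 _ Mna) => m2 [s2 [M2 S2 E2]].
have H : M (- (s1 + s2)).
  have -> : - (s1 + s2) = s2 * m1 + s1 * m2.
    transitivity (s2 * (m1 + s1 * a) + s1 * (m2 + s2 * - a)); last by ring.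
    by rewrite -E1 -E2; ring.
  by apply: (qmD hM); apply: (Sig_mul hM).
have Hn : M (- s1).
  have -> : - s1 = - (s1 + s2) + s2 by ring.
  exact: (qmD hM H (Sig_sub hM S2)).
have Hs : M (a * s1) by apply: (qm_supp hM) => //; apply: (Sig_sub hM).
by apply: Mp; rewrite E1 mulrC; apply: (qmD hM).
Qed.

Lemma exists_maxprop M0 : quadratic_module M0 -> ~ M0 (-1) ->
  exists M, maxprop M /\ M0 `<=` M.
Proof.
move=> h0 p0.
pose P := [set M | M = set0 \/ [/\ quadratic_module M, M0 `<=` M & ~ M (-1)]].
have [M [PM Mmax]] : exists M, P M /\ (forall B, M `<` B -> ~ P B).
  apply: Zorn_bigcup => F FP Ftot.
  case: (pselect (exists X, F X /\ [/\ quadratic_module X, M0 `<=` X & ~ X (-1)])).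
  - move=> [X0 [FX0 [qX0 sX0 pX0]]]; right.
    have good X : F X -> forall x, X x -> [/\ quadratic_module X, M0 `<=` X & ~ X (-1)].
      move=> FX x Xx; case: (FP X FX) => // eX; by rewrite eX in Xx.
    split.
    + split.
      * move=> a b [X1 FX1 X1a] [X2 FX2 X2b].
        case: (Ftot X1 X2 FX1 FX2) => sub.
        - case: (good X2 FX2 b X2b) => q2 _ _.
          by exists X2 => //; apply: (qmD q2 (sub _ X1a) X2b).
        - case: (good X1 FX1 a X1a) => q1 _ _.
          by exists X1 => //; apply: (qmD q1 X1a (sub _ X2b)).
      * move=> a g [X FX Xg]; case: (good X FX g Xg) => q _ _.
        by exists X => //; apply: (qmS q).
      * by exists X0 => //; apply: (qm1 qX0).
    + by move=> x M0x; exists X0 => //; apply: sX0.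
    + by move=> [X FX Xn]; case: (good X FX _ Xn).
  - move=> nex; left; apply/seteqP; split => [x [X FX Xx]|]; last exact: sub0set.
    case: (FP X FX) => [eX|]; first by rewrite eX in Xx.
    by move=> H; exfalso; apply: nex; exists X.
case: PM => [eM|[hM sM pM]].
  exfalso; apply: (Mmax M0); last by right; split.
  rewrite eM; split; first exact: sub0set.
  by move=> H; have := H 1 (qm1 h0).
exists M; split => //; split => // M' hM' sMM' pM'.
apply: contrapT => nsub; apply: (Mmax M'); first by split.
by right; split => //; apply: subset_trans sM sMM'.
Qed.

End Sig.

Section QM2.
Variables (R : realType) (A : comAlgType R) (M : set A).
Hypothesis hM : quadratic_module M.

Lemma qm_sqbound (d : R) (b : A) : 0 < d -> M (d%:A - b) -> M (d%:A + b) ->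
  M ((d ^+ 2)%:A - b ^+ 2).
Proof.
move=> d0 H1 H2.
have HX : M ((d%:A + b) ^+ 2 * (d%:A - b) + (d%:A - b) ^+ 2 * (d%:A + b)).
  exact: (qmD hM (qmS hM _ H1) (qmS hM _ H2)).
have eX : (d%:A + b) ^+ 2 * (d%:A - b) + (d%:A - b) ^+ 2 * (d%:A + b)
    = (2 * d)%:A * ((d ^+ 2)%:A - b ^+ 2).
  by rewrite algM algX algn; ring.
have -> : (d ^+ 2)%:A - b ^+ 2 = (2 * d)^-1 *: ((d%:A + b) ^+ 2 * (d%:A - b) + (d%:A - b) ^+ 2 * (d%:A + b)).
  rewrite eX mulr_algl scalerA mulVf ?scale1r //.
  by rewrite mulf_neq0 // ?pnatr_eq0 // gt_eqF.
apply: (qmZ hM) HX; rewrite invr_ge0; apply: mulr_ge0 => //; exact: ltW.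
Qed.

Lemma qm_scaleinv (r : R) (a : A) : 0 < r -> M (r *: a) -> M a.
Proof.
move=> r0 H; have -> : a = r^-1 *: (r *: a) by rewrite scalerA mulVf ?scale1r // gt_eqF.
by apply: (qmZ hM) H; rewrite invr_ge0 ltW.
Qed.

End QM2.

Section Char.
Variables (R : realType) (A : comAlgType R) (M : set A).
Hypothesis hM : quadratic_module M.
Hypothesis pM : ~ M (-1).
Hypothesis tot : forall a, M a \/ M (- a).
Hypothesis arch : forall a, exists n : nat, (0 < n)%N /\ M (n%:R + a).

Lemma sep (a : A) (r s : R) : M (a - r%:A) -> M (s%:A - a) -> r <= s.
Proof.
move=> H1 H2; rewrite leNgt; apply/negP => lt; apply: pM.
have H : M ((s - r)%:A).
  by rewrite algB; have := qmD hM H1 H2; congr M; ring.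
have rs0 : 0 < r - s by rewrite subr_gt0.
apply: (qm_scaleinv hM rs0).
by rewrite scalerN -scaleNr opprB.
Qed.

Definition E (a : A) := [set r : R | M (a - r%:A)].

Lemma E_sup a : has_sup (E a).
Proof.
split.
  case: (arch a) => n [_ Hn]; exists (- n%:R); rewrite /E /= algN opprK algn.
  by rewrite addrC.
case: (arch (- a)) => n [_ Hn]; exists n%:R => r Er.
by apply: (sep Er); rewrite algn.
Qed.

Definition ychar (a : A) := sup (E a).

Lemma yU a r : M (a - r%:A) -> r <= ychar a.
Proof. by move=> H; apply: sup_upper_bound (E_sup a) _ H. Qed.

Lemma yL a r : r < ychar a -> M (a - r%:A).
Proof.
move=> lt; have e0 : 0 < ychar a - r by rewrite subr_gt0.
case: (sup_adherent e0 (E_sup a)) => e Ee lte.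
have -> : a - r%:A = (a - e%:A) + (e - r)%:A by rewrite algB; ring.
apply: (qmCD hM) Ee; move: lte; rewrite /ychar; lra.
Qed.

Lemma yG a r : ychar a < r -> M (r%:A - a).
Proof.
move=> lt; case: (tot (a - r%:A)) => H; last by rewrite opprB in H.
by have := yU H; lra.
Qed.

Lemma ycharE a t : (forall r, r < t -> M (a - r%:A)) ->
  (forall r, t < r -> M (r%:A - a)) -> ychar a = t.
Proof.
move=> Hl Hu; apply/eqP; rewrite eq_le; apply/andP; split.
  rewrite leNgt; apply/negP => lt.
  have H1 : M (((t + ychar a) / 2)%:A - a) by apply: Hu; lra.
  have H2 : M (a - (((t + ychar a) / 2 + ychar a) / 2)%:A) by apply: yL; lra.
  by have := sep H2 H1; lra.
rewrite leNgt; apply/negP => lt.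
have H1 : M (a - ((ychar a + t) / 2)%:A) by apply: Hl; lra.
by have := yU H1; lra.
Qed.

Lemma yC c : ychar c%:A = c.
Proof.
apply: ycharE => r lt; rewrite -algB; apply: (qmC hM); lra.
Qed.

Lemma yD a b : ychar (a + b) = ychar a + ychar b.
Proof.
apply: ycharE => r lt.
  pose d := (ychar a + ychar b - r) / 2.
  have H1 := yL (_ : ychar a - d < ychar a).
  have H2 := yL (_ : ychar b - d < ychar b).
  have -> : a + b - r%:A = (a - (ychar a - d)%:A) + (b - (ychar b - d)%:A).
    have -> : r = (ychar a - d) + (ychar b - d) by rewrite /d; lra.
    by rewrite algD; ring.
  apply: (qmD hM); [apply: H1 | apply: H2]; rewrite /d; lra.
pose d := (r - ychar a - ychar b) / 2.
have H1 := yG (_ : ychar a < ychar a + d).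
have H2 := yG (_ : ychar b < ychar b + d).
have -> : r%:A - (a + b) = ((ychar a + d)%:A - a) + ((ychar b + d)%:A - b).
  have -> : r = (ychar a + d) + (ychar b + d) by rewrite /d; lra.
  by rewrite algD; ring.
apply: (qmD hM); [apply: H1 | apply: H2]; rewrite /d; lra.
Qed.

Lemma yPos a : M a -> 0 <= ychar a.
Proof. by move=> H; apply: yU; rewrite alg0 subr0. Qed.

Lemma y0 : ychar 0 = 0.
Proof. by rewrite -alg0 yC. Qed.

Lemma yN a : ychar (- a) = - ychar a.
Proof. by have := yD a (- a); rewrite subrr y0; lra. Qed.

Lemma yZp c a : 0 < c -> ychar (c *: a) = c * ychar a.
Proof.
move=> c0; apply: ycharE => r lt.
  have H := yL (_ : r / c < ychar a).
  have -> : c *: a - r%:A = c *: (a - (r / c)%:A).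
    by rewrite scalerBr scalerA mulrC divfK ?gt_eqF.
  apply: (qmZ hM); [exact: ltW | apply: H].
  by rewrite ltr_pdivrMr // mulrC.
have H := yG (_ : ychar a < r / c).
have -> : r%:A - c *: a = c *: ((r / c)%:A - a).
  by rewrite scalerBr scalerA mulrC divfK ?gt_eqF.
apply: (qmZ hM); [exact: ltW | apply: H].
by rewrite ltr_pdivlMr // mulrC.
Qed.

Lemma yZ c a : ychar (c *: a) = c * ychar a.
Proof.
case: (ltgtP c 0) => [c0|c0|->]; last by rewrite scale0r y0 mul0r.
  have -> : c *: a = - ((- c) *: a) by rewrite scaleNr opprK.
  by rewrite yN yZp ?oppr_gt0 // mulNr opprK.
exact: yZp.
Qed.

Lemma ysq0 b : ychar b = 0 -> ychar (b ^+ 2) = 0.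
Proof.
move=> yb; apply: ycharE => r lt.
  rewrite -algN; apply: (qmCD hM); [lra | exact: (qmsq hM)].
have d0 : 0 < Num.sqrt r by rewrite sqrtr_gt0.
have H1 : M ((Num.sqrt r)%:A - b) by apply: yG; rewrite yb.
have H2 : M ((Num.sqrt r)%:A + b).
  have := yL (_ : - Num.sqrt r < ychar b); rewrite algN opprK addrC; apply.
  by rewrite yb oppr_lt0.
have := qm_sqbound hM d0 H1 H2; rewrite sqr_sqrtr //; exact: ltW.
Qed.

Lemma ysq a : ychar (a ^+ 2) = ychar a ^+ 2.
Proof.
pose t := ychar a; pose b := a - t%:A.
have yb : ychar b = 0 by rewrite /b yD yN yC subrr.
have -> : a ^+ 2 = b ^+ 2 + (2 * t) *: b + (t ^+ 2)%:A.
  by rewrite -[(2 * t) *: b]mulr_algl algM algX algn /b; ring.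
by rewrite !yD ysq0 // yZ yb yC; rewrite /t; ring.
Qed.

Lemma yM a b : ychar (a * b) = ychar a * ychar b.
Proof.
have e : (4 : R) *: (a * b) = (a + b) ^+ 2 - (a - b) ^+ 2.
  by rewrite -mulr_algl algn; ring.
have := congr1 ychar e; rewrite yZ !yD !yN !ysq !yD !yN => h.
have : 4 * ychar (a * b) = 4 * (ychar a * ychar b) by rewrite h; ring.
by move/mulfI; apply; rewrite pnatr_eq0.
Qed.

Lemma ychar_hom : is_alg_hom ychar.
Proof.
split; [exact: yD | exact: yZ | exact: yM | by rewrite -alg1 yC].
Qed.

End Char.

Section Crux.
Variables (R : realType) (A : comAlgType R) (M : set A).
Hypothesis hM : quadratic_module M.

Lemma qmMC (r : R) (x : A) : 0 <= r -> M x -> M (r%:A * x).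
Proof. by move=> r0 Mx; rewrite mulr_algl; apply: (qmZ hM). Qed.

Lemma bprod (al be : R) (a b : A) : 0 < al -> 0 < be ->
  M (al%:A - a) -> M (al%:A + a) -> M (be%:A - b) -> M (be%:A + b) ->
  M ((al * be)%:A - a * b) /\ M ((al * be)%:A + a * b).
Proof.
move=> a0 b0 Ha1 Ha2 Hb1 Hb2.
have g0 : 0 < al * be by apply: mulr_gt0.
pose p := be%:A * a; pose q := al%:A * b.
have Hp1 : M ((al * be)%:A - p).
  have -> : (al * be)%:A - p = be%:A * (al%:A - a) by rewrite /p algM; ring.
  by apply: qmMC => //; exact: ltW.
have Hp2 : M ((al * be)%:A + p).
  have -> : (al * be)%:A + p = be%:A * (al%:A + a) by rewrite /p algM; ring.
  by apply: qmMC => //; exact: ltW.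
have Hq1 : M ((al * be)%:A - q).
  have -> : (al * be)%:A - q = al%:A * (be%:A - b) by rewrite /q algM; ring.
  by apply: qmMC => //; exact: ltW.
have Hq2 : M ((al * be)%:A + q).
  have -> : (al * be)%:A + q = al%:A * (be%:A + b) by rewrite /q algM; ring.
  by apply: qmMC => //; exact: ltW.
have d0 : 0 < al * be + al * be by apply: addr_gt0.
have S1 := qm_sqbound hM d0 (_ : M ((al * be + al * be)%:A - (p + q))) (_ : M ((al * be + al * be)%:A + (p + q))).
have S2 := qm_sqbound hM d0 (_ : M ((al * be + al * be)%:A - (p - q))) (_ : M ((al * be + al * be)%:A + (p - q))).
have f0 : 0 < (4%:R : R) * (al * be) by apply: mulr_gt0.
split.
  apply: (qm_scaleinv hM f0).
  have -> : ((4%:R : R) * (al * be)) *: ((al * be)%:A - a * b)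
     = ((al * be + al * be) ^+ 2)%:A - (p + q) ^+ 2 + (p - q) ^+ 2.
    by rewrite -[((4%:R : R) * (al * be)) *: _]mulr_algl /p /q !algM !algD !algM !alg1; ring.
  apply: (qmD hM); last exact: (qmsq hM).
  apply: S1.
    by have := qmD hM Hp1 Hq1; rewrite algD; congr M; ring.
  by have := qmD hM Hp2 Hq2; rewrite algD; congr M; ring.
apply: (qm_scaleinv hM f0).
have -> : ((4%:R : R) * (al * be)) *: ((al * be)%:A + a * b)
   = ((al * be + al * be) ^+ 2)%:A - (p - q) ^+ 2 + (p + q) ^+ 2.
  by rewrite -[((4%:R : R) * (al * be)) *: _]mulr_algl /p /q !algM !algD !algM !alg1; ring.
apply: (qmD hM); last exact: (qmsq hM).
apply: S2.
  by have := qmD hM Hp1 Hq2; rewrite algD; congr M; ring.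
by have := qmD hM Hp2 Hq1; rewrite algD; congr M; ring.
Qed.

Lemma bpow (rho : R) (u : A) : 0 < rho -> M (rho%:A - u) -> M (rho%:A + u) ->
  forall n, M ((rho ^+ n)%:A - u ^+ n) /\ M ((rho ^+ n)%:A + u ^+ n).
Proof.
move=> r0 H1 H2; elim=> [|n [IH1 IH2]].
  rewrite !expr0 alg1 subrr; split; first exact: (qm0 hM).
  exact: (qmD hM (qm1 hM) (qm1 hM)).
rewrite !exprS; apply: bprod => //; exact: exprn_gt0.
Qed.

Lemma sos_geom (u : A) m : exists P, Sig P /\
  (1 - u) * (1 + (u ^+ m) ^+ 2 + P) = 2%:R * (1 - (u ^+ m) ^+ 2 * u).
Proof.
elim: m => [|m [P [SP IH]]].
  exists 0; split; first exact: (qm0 (Sig_qm A)).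
  by rewrite expr0; ring.
exists (P + (u ^+ m + u ^+ m * u) ^+ 2); split.
  exact: (qmD (Sig_qm A) SP (qmsq (Sig_qm A) _)).
rewrite [u ^+ m.+1]exprSr.
transitivity ((1 - u) * (1 + (u ^+ m) ^+ 2 + P) +
   (1 - u) * ((u ^+ m * u) ^+ 2 + (u ^+ m + u ^+ m * u) ^+ 2 - (u ^+ m) ^+ 2)); first by ring.
by rewrite IH; ring.
Qed.

Lemma crux (K c T : R) (g t : A) : 0 < K -> 0 < c -> c < T ->
  M (K%:A - g) -> M (K%:A + g) -> M (T%:A - t) -> M (t - c%:A) -> M (t * g) ->
  forall m, M (g + (K * ((1 - c / T) ^+ m * (1 - c / T) ^+ m * (1 - c / T)))%:A).
Proof.
move=> K0 c0 cT Hg1 Hg2 Ht1 Ht2 Htg m.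
have T0 : 0 < T by apply: lt_trans cT.
have TV0 : 0 <= T^-1 by rewrite invr_ge0 ltW.
pose rho := 1 - c / T.
have rho0 : 0 < rho by rewrite /rho subr_gt0 ltr_pdivrMr // mul1r.
pose u := 1 - (T^-1)%:A * t.
have eTT : (T^-1)%:A * T%:A = 1 :> A by rewrite -algM mulVf ?alg1 // gt_eqF.
have Hu1 : M (rho%:A - u).
  have -> : rho%:A - u = (T^-1)%:A * (t - c%:A).
    by rewrite /u /rho algB alg1 mulrC algM; ring.
  exact: qmMC.
have Hu2 : M (rho%:A + u).
  have -> : rho%:A + u = (T^-1)%:A * (T%:A - t) + rho%:A.
    by rewrite mulrBr eTT /u; ring.
  apply: (qmCD hM); last exact: qmMC.
  exact: ltW.
have et : t = T%:A * (1 - u).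
  by rewrite /u; transitivity ((T^-1)%:A * T%:A * t); [rewrite eTT mul1r | ring].
case: (sos_geom u m) => P [SP eP].
pose v := u ^+ m.
pose x := ((2 * T)^-1)%:A * (1 + v ^+ 2 + P).
have Sx : Sig x.
  rewrite /x mulr_algl; apply: (qmZ (Sig_qm A)); first by rewrite invr_ge0 mulr_ge0 // ltW.
  apply: (qmD (Sig_qm A) (qmD (Sig_qm A) (qm1 (Sig_qm A)) (qmsq (Sig_qm A) _)) SP).
have ext : x * t = 1 - v ^+ 2 * u.
  rewrite /x et.
  transitivity (((2 * T)^-1 * T)%:A * ((1 - u) * (1 + v ^+ 2 + P))).
    by rewrite algM; ring.
  rewrite eP /v mulrA.
  have -> : ((2 * T)^-1 * T)%:A * 2%:R = 1 :> A.
    rewrite mulr_natr scalerMnl.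
    have -> : ((2 * T)^-1 * T) *+ 2 = 1.
      by rewrite -mulr_natr; field; rewrite gt_eqF.
    exact: alg1.
  by rewrite mul1r.
have [B1 B2] := bpow rho0 Hu1 Hu2 m.
have pm0 : 0 < rho ^+ m by apply: exprn_gt0.
have [C1 C2] := bprod pm0 pm0 B1 B2 B1 B2.
have [D1 D2] := bprod (mulr_gt0 pm0 pm0) rho0 C1 C2 Hu1 Hu2.
have [F1 F2] := bprod (mulr_gt0 (mulr_gt0 pm0 pm0) rho0) K0 D1 D2 Hg1 Hg2.
have -> : g + (K * (rho ^+ m * rho ^+ m * rho))%:A =
    x * (t * g) + ((rho ^+ m * rho ^+ m * rho * K)%:A + u ^+ m * u ^+ m * u * g).
  rewrite [x * (t * g)]mulrA ext /v (mulrC K); ring.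
exact: (qmD hM (Sig_mul hM Sx Htg) F2).
Qed.

End Crux.

Lemma pow_small (R : realType) (rho eps : R) : 0 < rho -> rho < 1 -> 0 < eps ->
  exists m, rho ^+ m <= eps.
Proof.
move=> r0 r1 e0; pose d := 1 - rho.
have d0 : 0 < d by rewrite /d subr_gt0.
have bern m : rho ^+ m * (1 + m%:R * d) <= 1.
  elim: m => [|m IH]; first by rewrite expr0 mul0r addr0 mul1r.
  have a0 : 0 <= rho ^+ m by apply: exprn_ge0; exact: ltW.
  have a1 : rho ^+ m <= 1 by apply: exprn_ile1; [exact: ltW | exact: ltW].
  have m0 : 0 <= m%:R :> R by [].
  rewrite exprS -natr1.
  set a := rho ^+ m in IH a0 a1 *.
  have ra : rho * a <= 1 by rewrite -[1]mulr1; apply: ler_pM => //; exact: ltW.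
  have h1 : 0 <= rho * (1 - a * (1 + m%:R * d)) by apply: mulr_ge0; [exact: ltW | lra].
  have h2 : 0 <= d * (1 - rho * a) by apply: mulr_ge0; [exact: ltW | lra].
  have ed : d = 1 - rho by [].
  rewrite ed in h1 h2 *; nra.
pose N := Num.Def.archi_bound ((eps * d)^-1).
have hN : (eps * d)^-1 < N%:R by apply: archi_boundP; rewrite invr_ge0 mulr_ge0 // ltW.
exists N.
have ed0 : 0 < eps * d by apply: mulr_gt0.
have H2 : 1 <= N%:R * d * eps.
  move: hN; rewrite -[X in X < _]div1r ltr_pdivrMr // => H; apply: ltW.
  by move: H; rewrite (mulrC eps) mulrA.
have := bern N; set a := rho ^+ N => H1.
have a0 : 0 <= a by apply: exprn_ge0; exact: ltW.
set t := N%:R * d in H1 H2.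
have t0 : 0 <= t by rewrite /t mulr_ge0 // ltW.
have h1 : 0 <= a * (t * eps - 1) by apply: mulr_ge0 => //; lra.
have h2 : 0 <= eps * (1 - a * (1 + t)) by apply: mulr_ge0; [exact: ltW | lra].
have h3 : 0 <= a * eps by apply: mulr_ge0 => //; exact: ltW.
nra.
Qed.

Section Jacobi.
Variables (R : realType) (A : comAlgType R) (Q : set A).
Hypothesis hQ : quadratic_module Q.
Hypothesis harch : archimedean_qm Q.

Lemma qm_eq (M : set A) (a b : A) : M a -> a = b -> M b.
Proof. by move=> H <-. Qed.

Lemma arch_bound (M : set A) : quadratic_module M -> Q `<=` M ->
  forall a, exists K : R, [/\ 0 < K, M (K%:A - a) & M (K%:A + a)].
Proof.
move=> hM QM a.
case: (harch (- a)) => n1 [n10 H1]; case: (harch a) => n2 [n20 H2].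
exists (n1%:R + n2%:R); split.
- by rewrite addr_gt0 // ltr0n.
- apply: (qm_eq (qmCD hM (ler0n R n2) (QM _ H1))); rewrite algD !algn; ring.
- apply: (qm_eq (qmCD hM (ler0n R n1) (QM _ H2))); rewrite algD !algn; ring.
Qed.

Lemma jacobi (f : A) :
  (forall y : A -> R, is_alg_hom y -> (forall g, Q g -> 0 <= y g) -> 0 < y f) ->
  Q f.
Proof.
move=> Hy.
have [s [q [Ss Qq E]]] : exists s q, [/\ Sig s, Q q & s * f = 1 + q].
  case: (pselect (gen Q (- f) (-1))) => [[q [s [Qq Ss E]]]|ng].
    exists s, q; split => //.
    transitivity (1 + q + (-1 - (q + s * - f))); first by ring.
    by rewrite -E subrr addr0.
  exfalso.
  case: (exists_maxprop (gen_qm (- f) hQ) ng) => M [[hM pM Mmax] sub].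
  have QM : Q `<=` M by move=> x Qx; apply: sub; exact: (gen_sub (- f) hQ).
  have tot := maxprop_total (And3 hM pM Mmax).
  have archM : forall a, exists n : nat, (0 < n)%N /\ M (n%:R + a).
    by move=> a; case: (harch a) => n [n0 Hn]; exists n; split => //; apply: QM.
  have hy := ychar_hom hM pM tot archM.
  have := Hy _ hy (fun g Qg => yPos hM pM archM (QM _ Qg)).
  have := yPos hM pM archM (sub _ (gen_a (- f) hQ)).
  rewrite (yN hM pM tot archM); lra.
case: (arch_bound hQ (fun x (h : Q x) => h) f) => K [K0 HK1 HK2].
case: (arch_bound hQ (fun x (h : Q x) => h) s) => T0 [T00 HT1 _].
pose c := K^-1.
have c0 : 0 < c by rewrite /c invr_gt0.
have Hlow : Q (s - c%:A).
  have H : Q (K%:A * s - 1).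
    apply: (qm_eq (qmD hQ (Sig_mul hQ Ss HK1) Qq)).
    by rewrite mulrBr E; ring.
  apply: (qm_eq (qmMC hQ (ltW c0) H)).
  rewrite mulrBr mulr1 mulrA -algM mulVf ?alg1 ?mul1r //; by rewrite gt_eqF.
pose T := T0 + c.
have cT : c < T by rewrite /T ltrDr.
have T0' : 0 < T by apply: lt_trans cT.
have HT : Q (T%:A - s).
  by apply: (qm_eq (qmCD hQ (ltW c0) HT1)); rewrite /T algD; ring.
pose del := (2 * T)^-1.
have del0 : 0 < del by rewrite /del invr_gt0 mulr_gt0.
have delT : del * T = 2^-1.
  by rewrite /del; field; rewrite gt_eqF.
pose g := f - del%:A.
have Htg : Q (s * g).
  have -> : s * g = q + del%:A * (T%:A - s) + (1 - del * T)%:A.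
    by rewrite /g mulrBr E algB alg1 algM; ring.
  apply: (qmCD hQ); first by rewrite delT; lra.
  by apply: (qmD hQ Qq); apply: (qmMC hQ (ltW del0) HT).
pose K' := K + del.
have K'0 : 0 < K' by rewrite /K' addr_gt0.
have Hg1 : Q (K'%:A - g).
  apply: (qm_eq (qmCD hQ (_ : 0 <= del + del) HK1)); first by rewrite addr_ge0 // ltW.
  by rewrite /K' /g !algD; ring.
have Hg2 : Q (K'%:A + g).
  by apply: (qm_eq HK2); rewrite /K' /g !algD; ring.
have Hcr := crux hQ K'0 c0 cT Hg1 Hg2 HT Hlow Htg.
pose rho := 1 - c / T.
have rho0 : 0 < rho by rewrite /rho subr_gt0 ltr_pdivrMr // mul1r.
have rho1 : rho < 1 by rewrite /rho ltrBlDr ltrDl divr_gt0.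
case: (pow_small rho0 rho1 (_ : 0 < del / K')) => [|m Hm].
  exact: divr_gt0.
have := Hcr m; rewrite -/rho => H.
pose w := rho ^+ m * rho ^+ m * rho.
have pm0 : 0 <= rho ^+ m by apply: exprn_ge0; exact: ltW.
have pm1 : rho ^+ m <= 1 by apply: exprn_ile1; exact: ltW.
have hw : K' * w <= del.
  have : rho ^+ m * K' <= del by rewrite -ler_pdivlMr.
  rewrite /w; set a := rho ^+ m in pm0 pm1 *.
  move=> h1; have h2 : 0 <= a * rho by apply: mulr_ge0 => //; exact: ltW.
  have h3 : a * rho <= 1 by rewrite -[1]mulr1; apply: ler_pM => //; exact: ltW.
  nra.
apply: (qm_eq (qmCD hQ (_ : 0 <= del - K' * w) H)); first by lra.
by rewrite /g algB; ring.
Qed.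

End Jacobi.

Theorem theorem1p1 (R : realType) (A : comAlgType R) (X : Type)
  (bar : A -> X -> R) (hbar : is_alg_hom_fun bar) (Q : set A)
  (hQ : quadratic_module Q) (hQarch : archimedean_qm Q) :
  (mmap hbar @` K_X bar Q = K_Y Q ->
     forall f : A, (forall x, K_X bar Q x -> 0 < bar f x) -> Q f) /\
  (closure (mmap hbar @` K_X bar Q) = K_Y Q ->
     forall f : A, (forall x, K_X bar Q x -> 0 <= bar f x) ->
       forall eps : R, 0 < eps -> Q (f + eps%:A)).
Proof.
have mkY (y : A -> R) : is_alg_hom y -> (forall g, Q g -> 0 <= y g) ->
    exists z : Ytype R A, K_Y Q z /\ forall a, hat a z = y a.
  move=> hy yQ.
  have Yy : ((y : {ptws A -> R}) \in Yset (A:=A)) by apply: mem_set.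
  by exists (SigSub Yy); split.
have hatm (x : X) (a : A) : hat a (mmap hbar x) = bar a x by [].
split.
  move=> eqK f Hf; apply: (jacobi hQ hQarch) => y hy yQ.
  case: (mkY y hy yQ) => z [Kz hz].
  rewrite -eqK in Kz; case: Kz => x Kx ex.
  by rewrite -hz -ex hatm; apply: Hf.
move=> eqK f Hf eps e0; apply: (jacobi hQ hQarch) => y hy yQ.
case: (mkY y hy yQ) => z [Kz hz].
have cf : continuous (hat f : Ytype R A -> R).
  move=> w; apply: (@continuous_comp _ _ _ (@set_val _ (Yset (A:=A))) (proj f)).
    exact: initial_continuous.
  exact: proj_continuous.
have Cc : closed [set w : Ytype R A | 0 <= hat f w].
  exact: ((continuous_closedP _).1 cf _ (closed_ge (y:=0))).
have sub : mmap hbar @` K_X bar Q `<=` [set w : Ytype R A | 0 <= hat f w].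
  by move=> _ [x Kx <-]; rewrite /= hatm; apply: Hf.
rewrite -eqK in Kz.
have := closureS sub Kz; rewrite -(closure_id _).1 // /= hz => yf.
have [hD hZ hM h1] := hy.
by rewrite hD hZ h1 mulr1; lra.
Qed.
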